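(* Let $W$ be a Coxeter group and $u\le v$ in $W$. If $s \in D_L(v)\setminus D_L(u)$, then the left multiplication map $x\mapsto sx$ maps $[u,v]$ to itself and restricts to a graph automorphism of $\Gamma(u,v)$. Similarly, if $s\in D_R(v)\setminus D_R(u)$, then right multiplication $x\mapsto xs$ restricts to a graph automorphism of $\Gamma(u,v)$.
   Context: $(W,S)$ is a Coxeter system with reflections $T$ (conjugates of $S$), length $\ell$ and Bruhat order $\le$ (transitive closure of $x<xt$, $t\in T$, $\ell(xt)>\ell(x)$). $D_L(w)=\{s\in S:\ell(sw)<\ell(w)\}$ and $D_R(w)=\{s\in S:\ell(ws)<\ell(w)\}$. $\Gamma(u,v)$ is the simple undirected graph on $[u,v]=\{x:u\le x\le v\}$ with edges $\{x,y\}$ whenever $y=xt$ for some $t\in T$. *)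

(* Defs.v *)
From HB Require Import structures.
From mathcomp Require Import all_boot monoid.
From Stdlib Require Import Relations ClassicalEpsilon.

Set Implicit Arguments.
Unset Strict Implicit.
Unset Printing Implicit Defensive.

Local Open Scope group_scope.

Section Coxeter.
Variable W : groupType.
Variable S : W -> Prop.

Definition word_prod (ws : seq W) : W := foldr (fun a b => a * b) 1 ws.

Definition is_word (ws : seq W) : Prop := forall x, x \in ws -> S x.

Definition is_order (G : groupType) (x : G) (n : nat) : Prop :=
  0 < n /\ x ^+ n = 1 /\ forall k, 0 < k -> x ^+ k = 1 -> n <= k.

(* (W,S) is a Coxeter system (Bourbaki): S consists of elements of order 2,
   S generates W, and W is presented by the generators S with relations
   (s t)^{m(s,t)} = 1, m(s,t) the order of s t in W (whenever finite):
   every map f from S to a group G satisfying these relations extends to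
   a group homomorphism W -> G. *)
Definition coxeter_system : Prop :=
  (forall s, S s -> is_order s 2) /\
  (forall w, exists ws, is_word ws /\ w = word_prod ws) /\
  (forall (G : groupType) (f : W -> G),
     (forall s t n, S s -> S t -> is_order (s * t) n -> (f s * f t) ^+ n = 1) ->
     exists g : W -> G, (forall x y, g (x * y) = g x * g y) /\
                        (forall s, S s -> g s = f s)).

Definition is_length (w : W) (n : nat) : Prop :=
  (exists ws, is_word ws /\ word_prod ws = w /\ size ws = n) /\
  (forall ws, is_word ws -> word_prod ws = w -> n <= size ws).

Definition ell (w : W) : nat := epsilon (inhabits 0%N) (is_length w).

Definition reflection (t : W) : Prop := exists w s, S s /\ t = w * s * w^-1.

Definition DL (w : W) (s : W) : Prop := S s /\ ell (s * w) < ell w.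
Definition DR (w : W) (s : W) : Prop := S s /\ ell (w * s) < ell w.

Definition bruhat_step (x y : W) : Prop :=
  exists t, reflection t /\ y = x * t /\ ell x < ell y.
Definition bruhat_le : W -> W -> Prop := clos_refl_trans W bruhat_step.

Definition interval (u v : W) (x : W) : Prop := bruhat_le u x /\ bruhat_le x v.

Definition gamma_edge (u v : W) (x y : W) : Prop :=
  interval u v x /\ interval u v y /\ exists t, reflection t /\ y = x * t.

End Coxeter.

Definition graph_automorphism (T : Type) (V : T -> Prop) (E : T -> T -> Prop)
  (phi : T -> T) : Prop :=
  (forall x, V x -> V (phi x)) /\
  (forall x y, V x -> V y -> phi x = phi y -> x = y) /\
  (forall y, V y -> exists x, V x /\ phi x = y) /\
  (forall x y, V x -> V y -> (E x y <-> E (phi x) (phi y))).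

(* Main.v *)
Require Import Defs.
From HB Require Import structures.
From mathcomp Require Import all_boot monoid boolp.
From Stdlib Require Import FunctionalExtensionality Relations.
Local Open Scope group_scope.
Set Implicit Arguments. Unset Strict Implicit. Unset Printing Implicit Defensive.

Definition GC (W : groupType) := (W * (W -> bool) * bool)%type.
HB.instance Definition _ (W : groupType) := Choice.on (GC W).

Section GCdef.
Variable W : groupType.
Definition gmul (x y : GC W) : GC W :=
  let: (a, f, e) := x in let: (b, g, e') := y in
  (a * b, fun r => g r (+) f (b * r * b^-1), e (+) e').
Definition gone : GC W := (1, fun _ => false, false).
Definition ginv (x : GC W) : GC W :=
  let: (a, f, e) := x in (a^-1, fun r => f (a^-1 * r * a), e).

Lemma gmulA : associative gmul.
Proof.
move=> [[a f] e] [[b g] e'] [[c h] e''] /=; congr (_, _, _).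
- by rewrite mulgA.
- apply: functional_extensionality => r. rewrite invgM !mulgA addbA.
  by rewrite -!mulgA.
- by rewrite addbA.
Qed.
Lemma gmul1 : left_id gone gmul.
Proof. move=> [[a f] e] /=; congr (_,_,_); first by rewrite mul1g.
by apply: functional_extensionality => r; rewrite addbF. Qed.
Lemma gmulg1 : right_id gone gmul.
Proof. move=> [[a f] e] /=; congr (_,_,_); first by rewrite mulg1.
 by apply: functional_extensionality => r; rewrite invg1 mulg1 mul1g.
by rewrite addbF. Qed.
Lemma gmulV : left_inverse gone ginv gmul.
Proof. move=> [[a f] e] /=; congr (_,_,_); first by rewrite mulVg.
 by apply: functional_extensionality => r; rewrite ?invgK ?mulgA ?mulVg ?mul1g ?mulgVK ?mulgK addbb.
by rewrite addbb. Qed.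
Lemma gmulVr : right_inverse gone ginv gmul.
Proof. move=> [[a f] e] /=; congr (_,_,_); first by rewrite mulgV.
 by apply: functional_extensionality => r; rewrite ?invgK ?mulgA ?mulVg ?mul1g ?mulgVK ?mulgK addbb.
by rewrite addbb. Qed.
End GCdef.

HB.instance Definition _ (W : groupType) := isGroup.Build (GC W) (@gmulA W) (@gmul1 W) (@gmulg1 W) (@gmulV W) (@gmulVr W).

Section Cox.
Variable W : groupType.
Variable S : W -> Prop.
Hypothesis cox : coxeter_system S.

Lemma ss s : S s -> s * s = 1.
Proof. by case: cox => h _ /h [_ [/= h2 _]]. Qed.
Lemma sinv s : S s -> s^-1 = s.
Proof. by move=> /ss /mulg1_eq. Qed.

Lemma word_prod_cat (a b : seq W) : word_prod (a ++ b) = word_prod a * word_prod b.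
Proof. elim: a => [|x a IH] /=; first by rewrite mul1g. by rewrite IH mulgA. Qed.

Lemma ell_spec w : is_length S w (ell S w).
Proof.
pose P n := exists ws, is_word S ws /\ word_prod ws = w /\ size ws = n.
have [ws [Hw Hp]] : exists ws, is_word S ws /\ w = word_prod ws by case: cox => _ [h _].
have ex : exists n, `[< P n >] by exists (size ws); apply/asboolP; exists ws.
case: (ex_minnP ex) => n /asboolP Pn Hmin.
have il : is_length S w n.
  split => // ws' H1 H2; apply: Hmin; apply/asboolP; by exists ws'.
rewrite /ell; apply: ClassicalEpsilon.epsilon_spec; by exists n.
Qed.

Lemma ell_min ws w : is_word S ws -> word_prod ws = w -> ell S w <= size ws.
Proof. by case: (ell_spec w) => _ h; apply: h. Qed.
Lemma ell_word w : exists ws, is_word S ws /\ word_prod ws = w /\ size ws = ell S w.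
Proof. by case: (ell_spec w). Qed.

Lemma is_word_cons x ws : S x -> is_word S ws -> is_word S (x :: ws).
Proof. by move=> Hx Hw y; rewrite inE => /orP [/eqP -> | /Hw]. Qed.
Lemma is_word_tail x ws : is_word S (x :: ws) -> S x /\ is_word S ws.
Proof. move=> H; split; first by apply: H; rewrite inE eqxx.
by move=> y Hy; apply: H; rewrite inE Hy orbT. Qed.

Lemma ellSl s x : S s -> ell S (s * x) <= (ell S x).+1.
Proof. move=> Hs; case: (ell_word x) => ws [H1 [H2 H3]].
rewrite -H3; apply: (@ell_min (s :: ws)); [exact: is_word_cons | by rewrite /= H2]. Qed.

Definition fS (x : W) : GC W := (x, fun r : W => r == x, true).

Lemma gmulE (x y : GC W) : x * y = gmul x y. Proof. by []. Qed.
Lemma gmulP (a b : W) f g (e e' : bool) :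
  gmul (a, f, e) (b, g, e') = (a * b, fun r => g r (+) f (b * r * b^-1), e (+) e').
Proof. by []. Qed.


Lemma eqb_iff (T : eqType) (a b c d : T) : (a = b <-> c = d) -> (a == b) = (c == d).
Proof. by move=> [h1 h2]; apply/eqP/eqP. Qed.

Lemma conj_iff (a r b : W) : a * r * a^-1 = b <-> r = a^-1 * b * a.
Proof.
split => [<-|->]; first by rewrite !mulgA mulVg mul1g mulgVK.
by rewrite !mulgA mulgV mul1g mulgK.
Qed.

Lemma powX (x : W) (h : W -> bool) k :
  ((x, h, false) : GC W) ^+ k =
  (x ^+ k, fun r => \big[addb/false]_(0 <= j < k) h (x ^+ j * r * (x ^+ j)^-1), false).
Proof.
elim: k => [|k IH]; first by rewrite !expg0 /=; congr (_,_,_); apply: functional_extensionality => r; rewrite big_geq.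
rewrite expgS IH gmulE gmulP; congr (_,_,_); first exact: (esym (expgS x k)).
by apply: functional_extensionality => r; rewrite big_nat_recr.
Qed.

Lemma rel_ok s t n : S s -> S t -> is_order (s * t) n -> (fS s * fS t) ^+ n = 1.
Proof.
move=> Hs Ht [n0 [xn _]].
set x := s * t.
have -> : fS s * fS t = (x, fun r : W => (r == t) (+) (t * r * t^-1 == s), false) by [].
rewrite powX xn; congr (_,_,_).
pose c m := (x ^+ m)^-1 * t.
have tx j : t * x ^+ j = (x ^+ j)^-1 * t.
  elim: j => [|j IH]; first by rewrite expg0 invg1 mulg1 mul1g.
  rewrite {1}expgSr mulgA IH expgS invgM /x invgM (sinv Hs) (sinv Ht) -!mulgA.
  by [].
have F j (r : W) : ((x ^+ j * r * (x ^+ j)^-1 == t) (+) (t * (x ^+ j * r * (x ^+ j)^-1) * t^-1 == s))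
   = (r == c j.*2) (+) (r == c j.*2.+1).
  congr (_ (+) _); apply: eqb_iff; rewrite ?conj_iff.
    by rewrite /c -mulgA tx mulgA -invgM -expgnDr addnn.
  suff -> : (x ^+ j)^-1 * (t^-1 * s * t) * x ^+ j = c j.*2.+1 by [].
  have ts : t * s = x^-1 by rewrite /x invgM (sinv Hs) (sinv Ht).
  rewrite (sinv Ht) -!mulgA tx /c -addnn -addnS expgnDr expgS !invgM.
  by rewrite !mulgA (sinv Hs) (sinv Ht).
apply: functional_extensionality => r /=.
under eq_bigr => j _ do rewrite F.
have G k : \big[addb/false]_(0 <= j < k) ((r == c j.*2) (+) (r == c j.*2.+1))
         = \big[addb/false]_(0 <= m < k.*2) (r == c m).
  elim: k => [|k IH]; first by rewrite !big_geq.
  by rewrite big_nat_recr //= IH doubleS !big_nat_recr //= addbA.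
rewrite G -addnn (@big_cat_nat _ _ _ n) ?leq_addr //=.
have cn m : c (m + n) = c m by rewrite /c expgnDr xn mulg1.
rewrite [X in _ (+) X](_ : _ = \big[addb/false]_(0 <= i < n) (r == c (i + n))).
  by under [X in _ (+) X]eq_bigr => m _ do rewrite cn; rewrite addbb.
by rewrite -{1}[n]add0n big_addn addnK.
Qed.


Lemma ghom_ex : exists g : W -> GC W,
  (forall x y, g (x * y) = g x * g y) /\ (forall s, S s -> g s = fS s).
Proof. case: cox => _ [_ h]; apply: h => s t n Hs Ht Ho; exact: rel_ok. Qed.

Definition g : W -> GC W :=
  proj1_sig (ClassicalEpsilon.constructive_indefinite_description _ ghom_ex).
Lemma gM x y : g (x * y) = g x * g y.
Proof. exact: (proj1 (proj2_sig (ClassicalEpsilon.constructive_indefinite_description _ ghom_ex))). Qed.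
Lemma gS s : S s -> g s = fS s.
Proof. exact: (proj2 (proj2_sig (ClassicalEpsilon.constructive_indefinite_description _ ghom_ex))). Qed.

Lemma g1 : g 1 = 1.
Proof. apply: (@mulgI _ (g 1)); by rewrite -gM !mulg1. Qed.

Definition phi (w r : W) : bool := (g w).1.2 r.
Definition sig (w : W) : bool := (g w).2.

Lemma c11 (p q : GC W) : (p * q).1.1 = p.1.1 * q.1.1.
Proof. by case: p => [[a f] e]; case: q => [[b h] e']. Qed.
Lemma c12 (p q : GC W) r : (p * q).1.2 r = q.1.2 r (+) p.1.2 (q.1.1 * r * (q.1.1)^-1).
Proof. by case: p => [[a f] e]; case: q => [[b h] e']. Qed.
Lemma c2 (p q : GC W) : (p * q).2 = p.2 (+) q.2.
Proof. by case: p => [[a f] e]; case: q => [[b h] e']. Qed.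

Lemma gfst w : (g w).1.1 = w.
Proof.
case: cox => _ [h _]; case: (h w) => ws [Hw ->] {h}.
elim: ws Hw => [|x ws IH] Hw /=; first by rewrite g1.
case/is_word_tail: Hw => Hx Hw.
by rewrite gM c11 IH // gS.
Qed.

Lemma phiM x y r : phi (x * y) r = phi y r (+) phi x (y * r * y^-1).
Proof. by rewrite /phi gM c12 gfst. Qed.
Lemma sigM x y : sig (x * y) = sig x (+) sig y.
Proof. by rewrite /sig gM c2. Qed.
Lemma phiS s r : S s -> phi s r = (r == s).
Proof. by move=> Hs; rewrite /phi gS. Qed.
Lemma sigS s : S s -> sig s = true.
Proof. by move=> Hs; rewrite /sig gS. Qed.
Lemma phi1 r : phi 1 r = false.
Proof. by rewrite /phi g1. Qed.
Lemma sig1 : sig 1 = false.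
Proof. by rewrite /sig g1. Qed.

Lemma sig_word ws : is_word S ws -> sig (word_prod ws) = odd (size ws).
Proof.
elim: ws => [|x ws IH] Hw /=; first exact: sig1.
case/is_word_tail: Hw => Hx Hw.
by rewrite sigM sigS // IH.
Qed.

Lemma odd_ell w : odd (ell S w) = sig w.
Proof. case: (ell_word w) => ws [H1 [H2 H3]]. by rewrite -H3 -sig_word // H2. Qed.

Lemma xorF (a b : bool) : false = a (+) b -> a = b.
Proof. by case: a; case: b. Qed.

Lemma sigV w : sig w^-1 = sig w.
Proof. have := sigM w^-1 w; rewrite mulVg sig1 => /xorF. done. Qed.

Lemma sig_refl t : reflection S t -> sig t = true.
Proof. case=> w [s [Hs ->]]. by rewrite !sigM (sigS Hs) sigV; case: (sig w). Qed.

Lemma refl_tt t : reflection S t -> t * t = 1.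
Proof. case=> w [s [Hs ->]].
by rewrite -!mulgA (mulgA w^-1) mulVg mul1g (mulgA s) (ss Hs) mul1g mulgV. Qed.

Lemma refl_inv t : reflection S t -> t^-1 = t.
Proof. by move/refl_tt/mulg1_eq. Qed.

Lemma phi_refl t : reflection S t -> phi t t = true.
Proof.
case=> w [s [Hs Ht]].
have e1 : w^-1 * t * w^-1^-1 = s by rewrite Ht invgK !mulgA mulVg mul1g mulgVK.
rewrite {1}Ht phiM e1 phiM (@phiS s s Hs) eqxx.
have e2 : s * s * s^-1 = s by rewrite mulgK.
rewrite e2.
have := phiM w^-1 w s; rewrite mulVg phi1.
have -> : w * s * w^-1 = t by rewrite Ht.
move/xorF ->.
by case: (phi w^-1 t).
Qed.

Lemma del ws t : reflection S t -> is_word S ws -> phi (word_prod ws) t ->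
  exists ws', is_word S ws' /\ size ws' < size ws /\ word_prod ws * t = word_prod ws'.
Proof.
move=> Ht; elim: ws => [|x ws IH] Hw /=; first by rewrite phi1.
case/is_word_tail: Hw => Hx Hw.
rewrite phiM (@phiS x _ Hx).
case H: (phi (word_prod ws) t) => /=.
  case: (IH Hw H) => ws' [H1 [H2 H3]].
  exists (x :: ws'); split; first exact: is_word_cons.
  by split; [|rewrite /= -H3 mulgA].
move=> /= /eqP E; exists ws; split => //; split => //.
by rewrite -E -!mulgA mulKg refl_tt // mulg1.
Qed.

Lemma exch w t : reflection S t -> ell S (w * t) < ell S w -> phi w t.
Proof.
move=> Ht Hl; apply/negPn/negP => Hn.
have H : phi (w * t) t by rewrite phiM phi_refl // mulgK (negbTE Hn).
case: (ell_word (w * t)) => ws [H1 [H2 H3]].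
rewrite -H2 in H; case: (del Ht H1 H) => ws' [H4 [H5 H6]].
rewrite H2 -mulgA refl_tt // mulg1 in H6.
have := ell_min H4 (esym H6). rewrite H3 in H5. 
move=> h; have := leq_ltn_trans h H5; rewrite ltnNge (ltnW Hl) //.
Qed.


Lemma odd_refl x t : reflection S t -> odd (ell S (x * t)) = ~~ odd (ell S x).
Proof. by move=> Ht; rewrite !odd_ell sigM (sig_refl Ht) addbT. Qed.
Lemma odd_sl s x : S s -> odd (ell S (s * x)) = ~~ odd (ell S x).
Proof. by move=> Hs; rewrite !odd_ell sigM (sigS Hs). Qed.

Lemma ne_odd m n : odd m = ~~ odd n -> m != n.
Proof. by move=> h; apply/eqP => e; move: h; rewrite e; case: (odd n). Qed.

Lemma refl_conj a t : reflection S t -> reflection S (a * t * a^-1).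
Proof. case=> w [s [Hs ->]]; exists (a * w), s; split => //.
by rewrite invgM !mulgA. Qed.

Lemma lstep x s : S s -> ell S x < ell S (s * x) -> bruhat_step S x (s * x).
Proof.
move=> Hs Hl; exists (x^-1 * s * x); split; last split => //.
  exists x^-1, s; split => //; by rewrite invgK.
by rewrite !mulgA mulgV mul1g.
Qed.

Lemma key x t s : reflection S t -> ell S x < ell S (x * t) -> S s ->
  x * t = s * x \/ bruhat_step S (s * x) (s * (x * t)).
Proof.
move=> Ht Hl Hs.
case: (ltnP (ell S (s * x)) (ell S (s * (x * t)))) => H.
  by right; exists t; split => //; split => //; rewrite mulgA.
left.
have H' : ell S ((s * x) * t) < ell S (s * x).
  rewrite ltn_neqAle -mulgA H andbT; apply: ne_odd; rewrite mulgA; exact: odd_refl.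
have := exch Ht H'; rewrite phiM (@phiS s _ Hs).
case Hp: (phi x t) => /=.
  case: (ell_word x) => ws [H1 [H2 H3]].
  rewrite -H2 in Hp; case: (del Ht H1 Hp) => ws' [H4 [H5 H6]].
  have := ell_min H4 (esym H6); rewrite H2 => h.
  have := leq_ltn_trans h H5; rewrite H3 ltnNge (ltnW Hl) //.
move/eqP => E; by rewrite -E mulgVK.
Qed.

Lemma M u w s : bruhat_le S u w -> S s ->
  bruhat_le S (s * u) (s * w) \/ (bruhat_le S (s * u) w /\ bruhat_le S u (s * w)).
Proof.
move=> H Hs; have H1 := @clos_rt_rt1n _ _ _ _ H.
elim: H1 {H} => [x|x y z Hxy Hyz IH]; first by left; apply: rt_refl.
have Hyz' := clos_rt1n_rt _ _ _ _ Hyz.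
case: Hxy => t [Ht [Ey Hl]]; subst y.
case: (key Ht Hl Hs) => [E|St].
  right; split; first by rewrite -E.
  have Ex : x = s * (x * t) by rewrite E mulgA (ss Hs) mul1g.
  case: IH => [h|[_ h]]; first by rewrite Ex.
  apply: rt_trans h; apply: rt_step; by exists t.
case: IH => [h|[h1 h2]].
  by left; apply: rt_trans h; apply: rt_step.
right; split; first by apply: rt_trans h1; apply: rt_step.
apply: rt_trans h2; apply: rt_step; by exists t.
Qed.

Lemma ssx s x : S s -> s * (s * x) = x.
Proof. by move=> Hs; rewrite mulgA (ss Hs) mul1g. Qed.

Lemma lift u w s : bruhat_le S u w -> S s -> ell S (s * w) < ell S w ->
  ell S u <= ell S (s * u) -> bruhat_le S (s * u) w /\ bruhat_le S u (s * w).
Proof.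
move=> H Hs Hw Hu.
case: (M H Hs) => // h.
have Hu' : ell S u < ell S (s * u).
  rewrite ltn_neqAle Hu andbT eq_sym; apply: ne_odd; exact: odd_sl.
have sw : bruhat_le S (s * w) w.
  apply: rt_step; rewrite -{2}(ssx w Hs); apply: lstep => //; by rewrite ssx.
split; first exact: rt_trans h sw.
apply: rt_trans h; apply: rt_step; exact: lstep.
Qed.

Lemma left_pres u v s x : bruhat_le S u v -> DL S v s -> ~ DL S u s ->
  interval S u v x -> interval S u v (s * x).
Proof.
move=> Huv [Hs Hv] Hu [Hux Hxv].
have Hu' : ell S u <= ell S (s * u) by rewrite leqNgt; apply/negP => h; apply: Hu.
case: (ltnP (ell S (s * x)) (ell S x)) => Hx.
  have sx : bruhat_le S (s * x) x.
    apply: rt_step; rewrite -{2}(ssx x Hs); apply: lstep => //; by rewrite ssx.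
  split; last exact: rt_trans sx Hxv.
  by case: (lift Hux Hs Hx Hu').
split; last by case: (lift Hxv Hs Hv Hx).
apply: rt_trans Hux _; apply: rt_step; apply: lstep => //.
rewrite ltn_neqAle Hx andbT eq_sym; apply: ne_odd; exact: odd_sl.
Qed.


Lemma word_rev ws : is_word S ws ->
  is_word S (rev ws) /\ word_prod (rev ws) = (word_prod ws)^-1.
Proof.
elim: ws => [|x ws IH] Hw /=; first by split => //; rewrite invg1.
case/is_word_tail: Hw => Hx Hw; case: (IH Hw) => H1 H2.
split.
  by move=> y; rewrite rev_cons mem_rcons inE => /orP [/eqP -> // | /H1].
by rewrite rev_cons -cats1 word_prod_cat H2 /= mulg1 invgM (sinv Hx).
Qed.

Lemma ell_inv_le w : ell S w^-1 <= ell S w.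
Proof.
case: (ell_word w) => ws [H1 [H2 H3]]; case: (word_rev H1) => H4 H5.
rewrite -H3 -(size_rev ws); apply: ell_min => //; by rewrite H5 H2.
Qed.
Lemma ell_inv w : ell S w^-1 = ell S w.
Proof. apply/eqP; rewrite eqn_leq ell_inv_le /=. by rewrite -{1}(invgK w) ell_inv_le. Qed.

Lemma step_inv x y : bruhat_step S x y -> bruhat_step S x^-1 y^-1.
Proof.
case=> t [Ht [-> Hl]]; exists (x * t * x^-1); split; first exact: refl_conj.
split; last by rewrite !ell_inv.
by rewrite invgM (refl_inv Ht) !mulgA mulVg mul1g.
Qed.

Lemma le_inv x y : bruhat_le S x y -> bruhat_le S x^-1 y^-1.
Proof.
elim => [a b /step_inv h|a|a b c _ h1 _ h2]; [exact: rt_step | exact: rt_refl | exact: rt_trans h1 h2].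
Qed.

Lemma interval_inv u v x : interval S u v x -> interval S u^-1 v^-1 x^-1.
Proof. by case=> h1 h2; split; apply: le_inv. Qed.
Lemma interval_invV u v x : interval S u^-1 v^-1 x^-1 -> interval S u v x.
Proof. by move/interval_inv; rewrite !invgK. Qed.

Lemma DR_DL v s : DR S v s <-> DL S v^-1 s.
Proof.
rewrite /DR /DL ell_inv; split => [[Hs H]|[Hs H]]; split => //.
  by rewrite -ell_inv invgM (sinv Hs) invgK.
by rewrite -ell_inv invgM (sinv Hs) invgK in H.
Qed.

Lemma gauto (V : W -> Prop) (E : W -> W -> Prop) (f : W -> W) :
  (forall x, V x -> V (f x)) -> (forall x, f (f x) = x) ->
  (forall x y, E x y -> E (f x) (f y)) -> graph_automorphism V E f.
Proof.
move=> HV Hf HE; split => //; split.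
  by move=> x y _ _ e; rewrite -(Hf x) e Hf.
split; first by move=> y Vy; exists (f y); split; [exact: HV | exact: Hf].
move=> x y _ _; split; first exact: HE.
by move/HE; rewrite !Hf.
Qed.

End Cox.

Theorem proposition3p2 (W : groupType) (S : W -> Prop) :
  coxeter_system S ->
  forall u v : W, bruhat_le S u v ->
  (forall s, DL S v s -> ~ DL S u s ->
     (forall x, interval S u v x -> interval S u v (s * x)) /\
     graph_automorphism (interval S u v) (gamma_edge S u v) (fun x => s * x)) /\
  (forall s, DR S v s -> ~ DR S u s ->
     (forall x, interval S u v x -> interval S u v (x * s)) /\
     graph_automorphism (interval S u v) (gamma_edge S u v) (fun x => x * s)).
Proof.
move=> cox u v Huv; split.
  move=> s Hv Hu.
  have Hs : S s by case: Hv.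
  have P x : interval S u v x -> interval S u v (s * x).
    exact: (left_pres cox Huv Hv Hu).
  split => //; apply: gauto => //; first by move=> x; exact: (ssx cox x Hs).
  move=> x y [Ix [Iy [t [Ht E]]]]; subst y; split; first exact: P.
  split; first exact: P.
  by exists t; split => //; rewrite mulgA.
move=> s Hv Hu.
have Hs : S s by case: Hv.
have Hv' := (DR_DL cox v s).1 Hv.
have Hu' : ~ DL S u^-1 s by move=> h; apply: Hu; apply/(DR_DL cox u s).
have Huv' := le_inv cox Huv.
have P x : interval S u v x -> interval S u v (x * s).
  move=> Ix; apply: (interval_invV cox); rewrite invgM (sinv cox Hs).
  exact: (left_pres cox Huv' Hv' Hu' (interval_inv cox Ix)).
have ss' x : x * s * s = x by rewrite -mulgA (ss cox Hs) mulg1.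
split => //; apply: gauto => //.
move=> x y [Ix [Iy [t [Ht E]]]]; subst y; split; first exact: P.
split; first exact: P.
exists (s * t * s^-1); split; first exact: refl_conj.
by rewrite (sinv cox Hs) !mulgA ss'.
Qed.
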